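(* Let $A$, $B$ be lattices that satisfy Whitman's condition (W) and that are each generated by a set of join prime elements and also generated by a set of meet prime elements. Let $D$ be a lattice and $g\colon A\to D$, $h\colon B\to D$ lattice epimorphisms. If the fiber product $\{(a,b)\in A\times B: g(a)=h(b)\}$ is a finitely generated sublattice of $A\times B$, then $g$ and $h$ are bounded.
   Context: Whitman's condition (W) for a lattice: for all finite subsets $S,T$, if $\bigwedge S\le\bigvee T$ then there is $s\in S$ with $s\le\bigvee T$ or there is $t\in T$ with $\bigwedge S\le t$. An element $p$ is join prime if $p\le x\vee y$ implies $p\le x$ or $p\le y$; meet prime dually. A lattice homomorphism $g\colon A\to D$ is lower bounded if for every $d\in D$ the set $\{x\in A: g(x)\ge d\}$ is empty or has a least element; upper bounded if for every $d$ the set $\{x\in A: g(x)\le d\}$ is empty or has a greatest element; bounded if both. *)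

(* Defs.v *)
(* lattices are mathcomp [latticeType]s (not necessarily bounded). *)
From HB Require Import structures.
From mathcomp Require Import all_boot all_order.
Set Implicit Arguments. Unset Strict Implicit. Unset Printing Implicit Defensive.
Import Order.Theory.
Local Open Scope order_scope.

Inductive genBy (T : Type) (mt jn : T -> T -> T) (X : T -> Prop) : T -> Prop :=
| genBy_base x : X x -> genBy mt jn X x
| genBy_meet x y : genBy mt jn X x -> genBy mt jn X y -> genBy mt jn X (mt x y)
| genBy_join x y : genBy mt jn X x -> genBy mt jn X y -> genBy mt jn X (jn x y).

Definition lgen d (L : latticeType d) (X : L -> Prop) : L -> Prop :=
  genBy (@Order.meet d L) (@Order.join d L) X.

Definition generated_by d (L : latticeType d) (X : L -> Prop) : Prop :=
  forall a : L, lgen X a.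

(* Meet / join of a nonempty finite set {x0} ∪ s. *)
Definition meetS d (L : latticeType d) (x0 : L) (s : seq L) : L :=
  foldr (@Order.meet d L) x0 s.
Definition joinS d (L : latticeType d) (x0 : L) (s : seq L) : L :=
  foldr (@Order.join d L) x0 s.

(* Whitman's condition (W), for nonempty finite subsets S = x0::s, T = y0::t. *)
Definition whitman d (L : latticeType d) : Prop :=
  forall (x0 : L) (s : seq L) (y0 : L) (t : seq L),
    meetS x0 s <= joinS y0 t ->
    (exists2 x, x \in x0 :: s & x <= joinS y0 t) \/
    (exists2 y, y \in y0 :: t & meetS x0 s <= y).

Definition join_prime d (L : latticeType d) (p : L) : Prop :=
  forall x y : L, p <= x `|` y -> p <= x \/ p <= y.
Definition meet_prime d (L : latticeType d) (p : L) : Prop :=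
  forall x y : L, x `&` y <= p -> x <= p \/ y <= p.

Definition gen_by_join_primes d (L : latticeType d) : Prop :=
  exists X : L -> Prop, (forall x, X x -> join_prime x) /\ generated_by X.
Definition gen_by_meet_primes d (L : latticeType d) : Prop :=
  exists X : L -> Prop, (forall x, X x -> meet_prime x) /\ generated_by X.

Definition lattice_hom d1 d2 (A : latticeType d1) (D : latticeType d2)
    (g : A -> D) : Prop :=
  (forall x y, g (x `&` y) = g x `&` g y) /\ (forall x y, g (x `|` y) = g x `|` g y).

Definition lattice_epi d1 d2 (A : latticeType d1) (D : latticeType d2)
    (g : A -> D) : Prop :=
  lattice_hom g /\ forall z : D, exists x : A, g x = z.

Definition lower_bounded d1 d2 (A : latticeType d1) (D : latticeType d2)
    (g : A -> D) : Prop :=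
  forall z : D, (forall x : A, ~ (z <= g x)) \/
    (exists m : A, z <= g m /\ forall x : A, z <= g x -> m <= x).
Definition upper_bounded d1 d2 (A : latticeType d1) (D : latticeType d2)
    (g : A -> D) : Prop :=
  forall z : D, (forall x : A, ~ (g x <= z)) \/
    (exists m : A, g m <= z /\ forall x : A, g x <= z -> x <= m).
Definition bounded_hom d1 d2 (A : latticeType d1) (D : latticeType d2)
    (g : A -> D) : Prop := lower_bounded g /\ upper_bounded g.

Definition prod_meet d1 d2 (A : latticeType d1) (B : latticeType d2)
    (p q : A * B) : A * B := (p.1 `&` q.1, p.2 `&` q.2).
Definition prod_join d1 d2 (A : latticeType d1) (B : latticeType d2)
    (p q : A * B) : A * B := (p.1 `|` q.1, p.2 `|` q.2).

Definition fiber_fin_gen d1 d2 d3 (A : latticeType d1) (B : latticeType d2)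
    (D : latticeType d3) (g : A -> D) (h : B -> D) : Prop :=
  exists S : seq (A * B),
    (forall p, p \in S -> g p.1 = h p.2) /\
    (forall a b, g a = h b <->
       genBy (@prod_meet d1 d2 A B) (@prod_join d1 d2 A B) (fun p => p \in S) (a, b)).

(* Main.v *)
Require Import Defs.
From HB Require Import structures.
From mathcomp Require Import all_boot all_order.
Set Implicit Arguments. Unset Strict Implicit. Unset Printing Implicit Defensive.
Import Order.Theory.
Local Open Scope order_scope.

Lemma meetS_le d (L : latticeType d) (x0 : L) s x : x \in s -> meetS x0 s <= x.
Proof.
elim: s => [|y s IH] //=; rewrite in_cons => /orP [/eqP ->|/IH H].
  exact: leIl.
exact: le_trans (leIr _ _) H.
Qed.

Lemma le_meetS d (L : latticeType d) (z x0 : L) s :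
  z <= x0 -> (forall x, x \in s -> z <= x) -> z <= meetS x0 s.
Proof.
move=> H0; elim: s => [|y s IH] //= Hs.
rewrite lexI Hs ?mem_head //= IH // => x Hx; apply: Hs; by rewrite in_cons Hx orbT.
Qed.

Lemma joinS_ge d (L : latticeType d) (x0 : L) s x : x \in s -> x <= joinS x0 s.
Proof.
elim: s => [|y s IH] //=; rewrite in_cons => /orP [/eqP ->|/IH H].
  exact: leUl.
exact: le_trans H (leUr _ _).
Qed.

Lemma ge_joinS d (L : latticeType d) (z x0 : L) s :
  x0 <= z -> (forall x, x \in s -> x <= z) -> joinS x0 s <= z.
Proof.
move=> H0; elim: s => [|y s IH] //= Hs.
rewrite leUx Hs ?mem_head //= IH // => x Hx; apply: Hs; by rewrite in_cons Hx orbT.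
Qed.

Lemma hom_meetS d1 d2 (A : latticeType d1) (D : latticeType d2) (g : A -> D)
  (x0 : A) s : (forall x y, g (x `&` y) = g x `&` g y) ->
  g (meetS x0 s) = meetS (g x0) (map g s).
Proof. by move=> gM; elim: s => [|y s IH] //=; rewrite gM IH. Qed.

Lemma hom_joinS d1 d2 (A : latticeType d1) (D : latticeType d2) (g : A -> D)
  (x0 : A) s : (forall x y, g (x `|` y) = g x `|` g y) ->
  g (joinS x0 s) = joinS (g x0) (map g s).
Proof. by move=> gJ; elim: s => [|y s IH] //=; rewrite gJ IH. Qed.

Section Core.
Variables (d1 d2 d3 : Order.disp_t)
  (A : latticeType d1) (B : latticeType d2) (D : latticeType d3)
  (g : A -> D) (h : B -> D) (S : seq (A * B)).

Let F := genBy (@prod_meet d1 d2 A B) (@prod_join d1 d2 A B) (fun p => p \in S).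

Hypothesis WB : whitman B.
Hypothesis ge : lattice_epi g.
Hypothesis he : lattice_epi h.
Hypothesis HS : forall p, p \in S -> g p.1 = h p.2.
Hypothesis HF : forall a b, g a = h b <-> F (a, b).

Lemma lower_core : gen_by_join_primes B -> lower_bounded g.
Proof.
case: ge => [[gM gJ] gs]; case: he => [[hM hJ] hs].
move=> [P [PJ Pgen]].
have Q : forall b, exists2 be : A, h b <= g be &
    forall t, F t -> b <= t.2 -> be <= t.1.
  move=> b; elim: (Pgen b) => {b}.
  - move=> p /PJ Pp; have [a0 Ha0] := gs (h p).
    exists (meetS a0 [seq q.1 | q <- S & p <= q.2]).
      rewrite hom_meetS //; apply: le_meetS; first by rewrite Ha0.
      move=> x /mapP [y /mapP [q]]; rewrite mem_filter => /andP [pq qS] -> ->.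
      by rewrite HS //; apply/meet_idPl; rewrite -hM (meet_idPl pq).
    move=> t; elim => {t}.
    + move=> q qS pq; apply: meetS_le; apply/mapP; exists q => //.
      by rewrite mem_filter pq qS.
    + move=> x y _ IHx _ IHy /=; rewrite lexI => /andP [px py].
      by rewrite lexI IHx ?IHy.
    + move=> x y _ IHx _ IHy /= /Pp [px|py].
        exact: le_trans (IHx px) (leUl _ _).
      exact: le_trans (IHy py) (leUr _ _).
  - move=> b1 b2 _ [be1 H1 K1] _ [be2 H2 K2].
    have [a0 Ha0] := gs (h (b1 `&` b2)).
    exists (be1 `&` (be2 `&` meetS a0 [seq q.1 | q <- S & b1 `&` b2 <= q.2])).
      rewrite !gM hM !lexI; apply/and3P; split.
      + exact: le_trans (leIl _ _) H1.
      + exact: le_trans (leIr _ _) H2.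
      rewrite hom_meetS //; apply: le_meetS; first by rewrite Ha0 hM.
      move=> x /mapP [y /mapP [q]]; rewrite mem_filter => /andP [pq qS] -> ->.
      by rewrite HS // -hM; apply/meet_idPl; rewrite -hM (meet_idPl pq).
    move=> t Ft; elim: Ft => {t}.
    + move=> q qS pq; apply: le_trans (leIr _ _) (le_trans (leIr _ _) _).
      apply: meetS_le; apply/mapP; exists q => //.
      by rewrite mem_filter pq qS.
    + move=> x y _ IHx _ IHy /=; rewrite lexI => /andP [px py].
      by rewrite lexI IHx ?IHy.
    + move=> x y Fx IHx Fy IHy /= bxy.
      have Ft : F (prod_join x y) by apply: genBy_join.
      have := WB (x0 := b2) (s := [:: b1]) (y0 := y.2) (t := [:: x.2]) bxy.
      case=> [[u]|[v]].
      * rewrite !inE => /orP [] /eqP -> ule.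
          exact: le_trans (leIr _ _) (le_trans (leIl _ _) (K2 _ Ft ule)).
        exact: le_trans (leIl _ _) (K1 _ Ft ule).
      * rewrite !inE => /orP [] /eqP -> ble.
          exact: le_trans (IHy ble) (leUr _ _).
        exact: le_trans (IHx ble) (leUl _ _).
  - move=> b1 b2 _ [be1 H1 K1] _ [be2 H2 K2].
    exists (be1 `|` be2); first by rewrite hJ gJ leU2.
    by move=> t Ft; rewrite leUx => /andP [p1 p2]; rewrite leUx K1 ?K2.
move=> z; right; have [b Hb] := hs z; have [be H1 K1] := Q b.
exists be; split; first by rewrite -Hb.
move=> x Hx; have [a Ha] := gs (h b).
have Fxa : F (x `&` a, b).
  apply/HF; rewrite gM Ha; apply/meet_idPr; by rewrite Hb.
exact: le_trans (K1 _ Fxa (lexx _)) (leIl _ _).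
Qed.
End Core.

Section Core2.
Variables (d1 d2 d3 : Order.disp_t)
  (A : latticeType d1) (B : latticeType d2) (D : latticeType d3)
  (g : A -> D) (h : B -> D) (S : seq (A * B)).

Let F := genBy (@prod_meet d1 d2 A B) (@prod_join d1 d2 A B) (fun p => p \in S).

Hypothesis WB : whitman B.
Hypothesis ge : lattice_epi g.
Hypothesis he : lattice_epi h.
Hypothesis HS : forall p, p \in S -> g p.1 = h p.2.
Hypothesis HF : forall a b, g a = h b <-> F (a, b).

Lemma upper_core : gen_by_meet_primes B -> upper_bounded g.
Proof.
case: ge => [[gM gJ] gs]; case: he => [[hM hJ] hs].
move=> [P [PJ Pgen]].
have Q : forall b, exists2 be : A, g be <= h b &
    forall t, F t -> t.2 <= b -> t.1 <= be.
  move=> b; elim: (Pgen b) => {b}.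
  - move=> p /PJ Pp; have [a0 Ha0] := gs (h p).
    exists (joinS a0 [seq q.1 | q <- S & q.2 <= p]).
      rewrite hom_joinS //; apply: ge_joinS; first by rewrite Ha0.
      move=> x /mapP [y /mapP [q]]; rewrite mem_filter => /andP [pq qS] -> ->.
      by rewrite HS //; apply/join_idPl; rewrite -hJ (join_idPl pq).
    move=> t; elim => {t}.
    + move=> q qS pq; apply: joinS_ge; apply/mapP; exists q => //.
      by rewrite mem_filter pq qS.
    + move=> x y _ IHx _ IHy /= /Pp [px|py].
        exact: le_trans (leIl _ _) (IHx px).
      exact: le_trans (leIr _ _) (IHy py).
    + move=> x y _ IHx _ IHy /=; rewrite leUx => /andP [px py].
      by rewrite leUx IHx ?IHy.
  - move=> b1 b2 _ [be1 H1 K1] _ [be2 H2 K2].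
    exists (be1 `&` be2); first by rewrite hM gM leI2.
    by move=> t Ft; rewrite lexI => /andP [p1 p2]; rewrite lexI K1 ?K2.
  - move=> b1 b2 _ [be1 H1 K1] _ [be2 H2 K2].
    have [a0 Ha0] := gs (h (b1 `|` b2)).
    exists (be1 `|` (be2 `|` joinS a0 [seq q.1 | q <- S & q.2 <= b1 `|` b2])).
      rewrite !gJ hJ !leUx; apply/and3P; split.
      + exact: le_trans H1 (leUl _ _).
      + exact: le_trans H2 (leUr _ _).
      rewrite hom_joinS //; apply: ge_joinS; first by rewrite Ha0 hJ.
      move=> x /mapP [y /mapP [q]]; rewrite mem_filter => /andP [pq qS] -> ->.
      by rewrite HS // -hJ; apply/join_idPl; rewrite -hJ (join_idPl pq).
    move=> t Ft; elim: Ft => {t}.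
    + move=> q qS pq; apply: le_trans _ (le_trans _ (leUr _ _)) (leUr _ _).
      apply: joinS_ge; apply/mapP; exists q => //.
      by rewrite mem_filter pq qS.
    + move=> x y Fx IHx Fy IHy /= bxy.
      have Ft : F (prod_meet x y) by apply: genBy_meet.
      have := WB (x0 := y.2) (s := [:: x.2]) (y0 := b2) (t := [:: b1]) bxy.
      case=> [[u]|[v]].
      * rewrite !inE => /orP [] /eqP -> ble.
          exact: le_trans (leIr _ _) (IHy ble).
        exact: le_trans (leIl _ _) (IHx ble).
      * rewrite !inE => /orP [] /eqP -> ule.
          exact: le_trans (K2 _ Ft ule) (le_trans (leUl _ _) (leUr _ _)).
        exact: le_trans (K1 _ Ft ule) (leUl _ _).
    + move=> x y _ IHx _ IHy /=; rewrite leUx => /andP [px py].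
      by rewrite leUx IHx ?IHy.
move=> z; right; have [b Hb] := hs z; have [be H1 K1] := Q b.
exists be; split; first by rewrite -Hb.
move=> x Hx; have [a Ha] := gs (h b).
have Fxa : F (x `|` a, b).
  apply/HF; rewrite gJ Ha; apply/join_idPr; by rewrite Hb.
exact: le_trans (leUl _ _) (K1 _ Fxa (lexx _)).
Qed.
End Core2.

Lemma genBy_swap d1 d2 (A : latticeType d1) (B : latticeType d2) (S : seq (A * B)) u :
  genBy (@prod_meet d1 d2 A B) (@prod_join d1 d2 A B) (fun p => p \in S) u ->
  genBy (@prod_meet d2 d1 B A) (@prod_join d2 d1 B A)
     (fun p => p \in [seq (q.2, q.1) | q <- S]) (u.2, u.1).
Proof.
elim => {u}.
- move=> x xS; apply: genBy_base; apply/mapP; by exists x.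
- by move=> x y _ Hx _ Hy; apply: (genBy_meet Hx Hy).
- by move=> x y _ Hx _ Hy; apply: (genBy_join Hx Hy).
Qed.

Lemma genBy_unswap d1 d2 (A : latticeType d1) (B : latticeType d2) (S : seq (A * B)) u :
  genBy (@prod_meet d2 d1 B A) (@prod_join d2 d1 B A)
     (fun p => p \in [seq (q.2, q.1) | q <- S]) u ->
  genBy (@prod_meet d1 d2 A B) (@prod_join d1 d2 A B) (fun p => p \in S) (u.2, u.1).
Proof.
elim => {u}.
- move=> x /mapP [q qS ->]; apply: genBy_base; by case: q qS.
- by move=> x y _ Hx _ Hy; apply: (genBy_meet Hx Hy).
- by move=> x y _ Hx _ Hy; apply: (genBy_join Hx Hy).
Qed.

Theorem mainTheorem4 (d1 d2 d3 : Order.disp_t)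
  (A : latticeType d1) (B : latticeType d2) (D : latticeType d3)
  (g : A -> D) (h : B -> D) :
  whitman A -> gen_by_join_primes A -> gen_by_meet_primes A ->
  whitman B -> gen_by_join_primes B -> gen_by_meet_primes B ->
  lattice_epi g -> lattice_epi h ->
  fiber_fin_gen g h ->
  bounded_hom g /\ bounded_hom h.
Proof.
move=> WA JA MA WB JB MB ge he [S [HS HF]].
have HS' : forall p, p \in [seq (q.2, q.1) | q <- S] -> h p.1 = g p.2.
  by move=> p /mapP [q qS ->]; rewrite /= HS.
have HF' : forall b a, h b = g a <-> genBy (@prod_meet d2 d1 B A) (@prod_join d2 d1 B A)
     (fun p => p \in [seq (q.2, q.1) | q <- S]) (b, a).
  move=> b a; split.
    by move=> E; apply: (genBy_swap (u := (a, b))); apply/HF.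
  by move/genBy_unswap => /HF.
split; split.
- exact: (lower_core WB ge he HS HF JB).
- exact: (upper_core WB ge he HS HF MB).
- exact: (lower_core WA he ge HS' HF' JA).
- exact: (upper_core WA he ge HS' HF' MA).
Qed.
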